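(* Let $G$ be a group with bounded centralizer sequences. Then $[g_1,g_2]=g_1g_2g_1^{-1}g_2^{-1}$ is a weak identity in $G$.
   Context: A group $G$ has bounded centralizer sequences if there is an integer $N$ such that for every chain of subsets $P_1\subset P_2\subset\dots\subset P_N$ of $G$ with each $P_i$ consisting of mutually commuting elements, the chain of centralizers $C_G(P_1)\supseteq C_G(P_2)\supseteq\dots\supseteq C_G(P_N)$ is not strictly decreasing. Let $F$ be the free group on countably many generators $g_1,g_2,\dots$. For $N\ge1$, $F^{\times N}$ is the direct product of $N$ copies of $F$, $i_k:F\to F^{\times N}$ the $k$-th inclusion. An element $f\in F$ is a weak identity in $G$ if there exists $N\ge1$ such that for every homomorphism $\rho:F^{\times N}\to G$ there is $k\in\{1,\dots,N\}$ with $\rho(i_k(f))=1$. *)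

(* Defs.v *)
From mathcomp Require Import all_boot.
From mathcomp Require Export monoid.

Set Implicit Arguments.
Unset Strict Implicit.
Unset Printing Implicit Defensive.

Local Open Scope group_scope.

Definition centralizer (G : groupType) (P : G -> Prop) : G -> Prop :=
  fun g => forall p, P p -> g * p = p * g.

Definition mutually_commuting (G : groupType) (P : G -> Prop) : Prop :=
  forall x y, P x -> P y -> x * y = y * x.

Definition bounded_centralizer_sequences (G : groupType) : Prop :=
  exists N : nat, forall P : nat -> (G -> Prop),
    (forall i, i < N -> mutually_commuting (P i)) ->
    (forall i, i.+1 < N -> forall x, P i x -> P i.+1 x) ->
    ~ (forall i, i.+1 < N ->
         (forall g, centralizer (P i.+1) g -> centralizer (P i) g) /\
         (exists g, centralizer (P i) g /\ ~ centralizer (P i.+1) g)).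

(* A letter (n, true) is the generator g_(n+1), (n, false) its inverse. *)
Definition letter := (nat * bool)%type.

Definition cancels (a b : letter) : bool := (a.1 == b.1) && (a.2 != b.2).

Definition reduced (w : seq letter) : bool := sorted (fun a b => ~~ cancels a b) w.

Definition FreeGroup := {w : seq letter | reduced w}.

Definition push (a : letter) (w : seq letter) : seq letter :=
  match w with
  | b :: w' => if cancels a b then w' else a :: w
  | [::] => [:: a]
  end.

Lemma push_reduced a w : reduced w -> reduced (push a w).
Proof.
case: w => [|b w] //= Hw.
case: ifP => Hab; first exact: (path_sorted Hw).
by rewrite /= Hab.
Qed.

Definition normalize (w : seq letter) : seq letter := foldr push [::] w.

Lemma normalize_reduced w : reduced (normalize w).
Proof. by elim: w => [|a w IH] //=; apply: push_reduced. Qed.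

Definition fmul (u v : FreeGroup) : FreeGroup :=
  exist _ (normalize (val u ++ val v)) (normalize_reduced _).

Definition fone : FreeGroup := exist _ [::] isT.

Definition comm_g1g2 : FreeGroup :=
  exist _ [:: (0%N, true); (1%N, true); (0%N, false); (1%N, false)] isT.

Definition FreePow (N : nat) := 'I_N -> FreeGroup.

Definition pow_mul N (a b : FreePow N) : FreePow N := fun j => fmul (a j) (b j).

Definition incl N (k : 'I_N) (f : FreeGroup) : FreePow N :=
  fun j => if j == k then f else fone.

Definition is_hom (G : groupType) N (rho : FreePow N -> G) : Prop :=
  forall a b, rho (pow_mul a b) = rho a * rho b.

Definition weak_identity (G : groupType) (f : FreeGroup) : Prop :=
  exists N : nat, 0 < N /\
    forall rho : FreePow N -> G, is_hom rho ->
      exists k : 'I_N, rho (incl k f) = 1.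

(* Main.v *)
Require Import Defs.
From mathcomp Require Import all_boot.
From mathcomp Require Import monoid.
From Stdlib Require Import Classical FunctionalExtensionality.

Set Implicit Arguments.
Unset Strict Implicit.
Unset Printing Implicit Defensive.
Local Open Scope group_scope.

Lemma normalize_id w : reduced w -> normalize w = w.
Proof.
elim: w => [|a w IH] //= Hw.
rewrite IH; last exact: (path_sorted Hw).
case: w Hw {IH} => [|b w] //= /andP [Hab _].
by rewrite (negbTE Hab).
Qed.

Lemma fmul1g u : fmul fone u = u.
Proof.
case: u => w Hw; apply: val_inj => /=; exact: normalize_id.
Qed.

Lemma fmulg1 u : fmul u fone = u.
Proof.
case: u => w Hw; apply: val_inj => /=; rewrite cats0; exact: normalize_id.
Qed.

Lemma incl_comm N (j k : 'I_N) u v : j != k ->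
  pow_mul (incl j u) (incl k v) = pow_mul (incl k v) (incl j u).
Proof.
move=> Hjk; apply: functional_extensionality => i; rewrite /pow_mul /incl.
case: (i =P j) => [->|_]; first by rewrite (negbTE Hjk) fmulg1 fmul1g.
case: (i =P k) => _; by rewrite ?fmulg1 ?fmul1g.
Qed.

Lemma incl_mul N (k : 'I_N) u v :
  pow_mul (incl k u) (incl k v) = incl k (fmul u v).
Proof.
apply: functional_extensionality => i; rewrite /pow_mul /incl.
by case: (i == k); rewrite ?fmulg1.
Qed.

Lemma incl_one N (k : 'I_N) (j : 'I_N) : incl k fone j = fone.
Proof. by rewrite /incl; case: (j == k). Qed.

Definition g1 : FreeGroup := exist _ [:: (0%N, true)] isT.
Definition g2 : FreeGroup := exist _ [:: (1%N, true)] isT.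
Definition g1i : FreeGroup := exist _ [:: (0%N, false)] isT.
Definition g2i : FreeGroup := exist _ [:: (1%N, false)] isT.

Lemma comm_decomp :
  comm_g1g2 = fmul (fmul (fmul g1 g2) g1i) g2i.
Proof. by apply: val_inj. Qed.

Lemma g1_inv : fmul g1 g1i = fone.
Proof. by apply: val_inj. Qed.
Lemma g2_inv : fmul g2 g2i = fone.
Proof. by apply: val_inj. Qed.

Section Hom.
Variables (G : groupType) (N : nat) (rho : FreePow N -> G).
Hypothesis Hrho : is_hom rho.

Lemma rho_cross (j k : 'I_N) u v : j != k ->
  rho (incl j u) * rho (incl k v) = rho (incl k v) * rho (incl j u).
Proof. by move=> H; rewrite -!Hrho incl_comm. Qed.

Lemma rho_one (k : 'I_N) : rho (incl k fone) = 1.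
Proof.
have E : rho (incl k fone) = rho (incl k fone) * rho (incl k fone).
  by rewrite -Hrho incl_mul fmulg1.
by apply: (@mulIg _ (rho (incl k fone))); rewrite mul1g -E.
Qed.

Lemma rho_inv (k : 'I_N) u ui : fmul u ui = fone ->
  rho (incl k ui) = (rho (incl k u))^-1.
Proof.
move=> H.
have E : rho (incl k u) * rho (incl k ui) = 1 by rewrite -Hrho incl_mul H rho_one.
by rewrite -(mulg1_eq E).
Qed.

Lemma rho_comm (k : 'I_N) :
  rho (incl k comm_g1g2) = 1 ->
  rho (incl k g1) * rho (incl k g2) = rho (incl k g2) * rho (incl k g1).
Proof.
rewrite comm_decomp -!incl_mul !Hrho (rho_inv k g1_inv) (rho_inv k g2_inv).
set a := rho (incl k g1); set b := rho (incl k g2) => E.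
have : a * b * a^-1 = b by rewrite -[RHS]mul1g -E mulgVK.
by move=> E2; rewrite -{2}E2 mulgVK.
Qed.
End Hom.

Theorem lemma3p3 (G : groupType) :
  bounded_centralizer_sequences G -> weak_identity G comm_g1g2.
Proof.
case=> N0 HN0; exists N0.+1; split => // rho Hrho.
apply: NNPP => Hno.
have Hnc : forall k : 'I_N0.+1,
    rho (incl k g1) * rho (incl k g2) <> rho (incl k g2) * rho (incl k g1).
  move=> k Hc; apply: Hno; exists k.
  rewrite comm_decomp -!incl_mul !Hrho (rho_inv Hrho k g1_inv) (rho_inv Hrho k g2_inv).
  by rewrite Hc mulgK mulgV.
pose a (j : 'I_N0.+1) := rho (incl j g1).
pose b (j : 'I_N0.+1) := rho (incl j g2).
pose P (i : nat) (x : G) := exists j : 'I_N0.+1, (j < i)%N /\ x = a j.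
apply: (HN0 P).
- move=> i _ x y [j [_ ->]] [j' [_ ->]].
  case: (eqVneq j j') => [->//|Hjj].
  exact: rho_cross.
- move=> i _ x [j [Hj ->]]; exists j; split => //; exact: ltnW.
- move=> i Hi; split.
    move=> g Hg p [j [Hj ->]]; apply: Hg; exists j; split => //; exact: ltnW.
  have Hi' : (i < N0.+1)%N by apply: (ltn_trans _ (ltnSn _)); apply: ltnW.
  pose k : 'I_N0.+1 := Ordinal Hi'.
  exists (b k); split.
    move=> p [j [Hj ->]].
    have Hjk : k != j by apply/eqP => E; rewrite -E /= ltnn in Hj.
    by rewrite /a /b rho_cross.
  move=> Hc; apply: (Hnc k); symmetry; apply: Hc.
  by exists k; split.
Qed.
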